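(* Let $P=(P;\tau,\le,\zeta)$ be a $pm$-space of height at most $1$ and let $X\subseteq P$ be a clopen decreasing set, regarded as an element of the dual algebra $E(P)$. Then for every $n<\omega$, $$X^{n(\prime\ast)}=\{x\in P:\ \ell(x,P\setminus X)>n\}\ \text{ if $n$ is even},\qquad X^{n(\prime\ast)}=\{x\in P:\ \ell(x,\zeta(P\setminus X))>n\}\ \text{ if $n$ is odd}.$$ Moreover, for $x\in P$, $\ell(x,P\setminus X)$ is infinite if and only if $Q_x\subseteq X$, and $\ell(x,\zeta(P\setminus X))$ is infinite if and only if $\zeta(Q_x)\subseteq X$.
   Context: A $pm$-space is $(P;\tau,\le,\zeta)$ where $(P;\tau,\le)$ is a Priestley space, $[X)$ is clopen for every clopen decreasing $X$, and $\zeta$ is a continuous order-reversing involution. Its dual algebra $E(P)$ consists of the clopen decreasing subsets of $P$ with $\cap,\cup,\emptyset,P$, $X^\ast=P\setminus[X)$ and $X'=P\setminus\zeta(X)$. For an element $x$ of a $pm$-algebra, $x^{0(\prime\ast)}=x$ and $x^{(k+1)(\prime\ast)}=((x^{k(\prime\ast)})')^\ast$. For $x,y\in P$, $\ell(x,y)$ is $0$ if $x=y$, otherwise the length of a shortest path from $x$ to $y$ in the comparability graph of $(P;\le)$ (vertices $P$, edges between distinct comparable elements), and $\ell(x,y)=\infty$ if there is no such path; $\infty>n$ for all $n<\omega$. For $A\subseteq P$, $\ell(x,A)=\min\{\ell(x,y):y\in A\}$ if $A\neq\emptyset$ and $\ell(x,\emptyset)=\infty$. An order component is a maximal subset of $P$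 in which all distances are finite; $Q_x$ is the order component containing $x$. *)

(* Defs.v *)
From Stdlib Require Import List Arith.
Import ListNotations.

Set Implicit Arguments.
Section Defs.
Context {T : Type}.

Definition is_topology (opn : (T -> Prop) -> Prop) : Prop :=
  opn (fun _ => True) /\ opn (fun _ => False) /\
  (forall U V, opn U -> opn V -> opn (fun x => U x /\ V x)) /\
  (forall F : (T -> Prop) -> Prop, (forall U, F U -> opn U) ->
      opn (fun x => exists U, F U /\ U x)) /\
  (forall U V, (forall x, U x <-> V x) -> opn U -> opn V).

Definition compact (opn : (T -> Prop) -> Prop) : Prop :=
  forall F : (T -> Prop) -> Prop, (forall U, F U -> opn U) ->
    (forall x, exists U, F U /\ U x) ->
    exists l : list (T -> Prop), (forall U, In U l -> F U) /\
       (forall x, exists U, In U l /\ U x).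

Definition clopen (opn : (T -> Prop) -> Prop) (X : T -> Prop) : Prop :=
  opn X /\ opn (fun x => ~ X x).

Definition continuous (opn : (T -> Prop) -> Prop) (f : T -> T) : Prop :=
  forall U, opn U -> opn (fun x => U (f x)).

Definition partial_order (le : T -> T -> Prop) : Prop :=
  (forall x, le x x) /\ (forall x y, le x y -> le y x -> x = y) /\
  (forall x y z, le x y -> le y z -> le x z).

Definition decreasing (le : T -> T -> Prop) (X : T -> Prop) : Prop :=
  forall x y, X y -> le x y -> X x.
Definition increasing (le : T -> T -> Prop) (X : T -> Prop) : Prop :=
  forall x y, X x -> le x y -> X y.

Definition upset (le : T -> T -> Prop) (X : T -> Prop) : T -> Prop :=
  fun y => exists x, X x /\ le x y.

Definition priestley_space (opn : (T -> Prop) -> Prop) (le : T -> T -> Prop) : Prop :=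
  is_topology opn /\ compact opn /\ partial_order le /\
  (forall x y, ~ le x y ->
     exists U, clopen opn U /\ increasing le U /\ U x /\ ~ U y).

Definition pm_space (opn : (T -> Prop) -> Prop) (le : T -> T -> Prop) (zeta : T -> T) : Prop :=
  priestley_space opn le /\
  (forall X, clopen opn X -> decreasing le X -> clopen opn (upset le X)) /\
  continuous opn zeta /\
  (forall x y, le x y -> le (zeta y) (zeta x)) /\
  (forall x, zeta (zeta x) = x).

Definition height_le1 (le : T -> T -> Prop) : Prop :=
  forall x y z, le x y -> le y z -> x <> y -> y <> z -> False.

Definition image (zeta : T -> T) (X : T -> Prop) : T -> Prop :=
  fun y => exists x, X x /\ y = zeta x.

Definition pstar (le : T -> T -> Prop) (X : T -> Prop) : T -> Prop :=
  fun x => ~ upset le X x.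
Definition pprime (zeta : T -> T) (X : T -> Prop) : T -> Prop :=
  fun x => ~ image zeta X x.

Fixpoint iter_ps (le : T -> T -> Prop) (zeta : T -> T) (n : nat) (X : T -> Prop)
  : T -> Prop :=
  match n with
  | O => X
  | S k => pstar le (pprime zeta (iter_ps le zeta k X))
  end.

Inductive walk (le : T -> T -> Prop) : T -> T -> nat -> Prop :=
| walk0 : forall x, walk le x x 0
| walkS : forall x z y n, x <> z -> (le x z \/ le z x) -> walk le z y n ->
          walk le x y (S n).

(* ell(x,y) <= n  (ell(x,y) is the least length of such a walk, 0 if x = y, infinite if none) *)
Definition ell_le (le : T -> T -> Prop) (x y : T) (n : nat) : Prop :=
  exists k, k <= n /\ walk le x y k.

(* ell(x,A) > n, where ell(x,A) = min over y in A (infinite if A empty) *)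
Definition ell_set_gt (le : T -> T -> Prop) (x : T) (A : T -> Prop) (n : nat) : Prop :=
  forall y, A y -> ~ ell_le le x y n.

Definition ell_set_inf (le : T -> T -> Prop) (x : T) (A : T -> Prop) : Prop :=
  forall y, A y -> forall n, ~ ell_le le x y n.

Definition Qcomp (le : T -> T -> Prop) (x : T) : T -> Prop :=
  fun y => exists n, ell_le le x y n.

End Defs.

(* Main.v *)
Require Import Defs.
From Stdlib Require Import Arith PeanoNat.
From Stdlib Require Import Classical Lia Bool.

Lemma walk_zeta (T : Type) (le : T -> T -> Prop) (zeta : T -> T)
  (Hrev : forall x y, le x y -> le (zeta y) (zeta x))
  (Hinv : forall x, zeta (zeta x) = x) :
  forall x y n, walk le x y n -> walk le (zeta x) (zeta y) n.
Proof.
  induction 1. constructor.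
  econstructor.
  - intro E. apply H. rewrite <- (Hinv x), E, Hinv. reflexivity.
  - destruct H0; [right|left]; auto.
  - exact IHwalk.
Qed.

Lemma L1 (T : Type) (le : T -> T -> Prop) (zeta : T -> T)
  (Hrev : forall x y, le x y -> le (zeta y) (zeta x))
  (Hinv : forall x, zeta (zeta x) = x) D k y :
  ell_set_gt le (zeta y) D k <-> ell_set_gt le y (image zeta D) k.
Proof.
  split.
  - intros H a [b [Hb ->]] [j [Hj W]]. apply (H b Hb). exists j. split; auto.
    rewrite <- (Hinv b). apply walk_zeta; auto.
  - intros H b Hb [j [Hj W]]. apply (H (zeta b)). exists b; auto.
    exists j. split; auto. rewrite <- (Hinv y). apply walk_zeta; auto.
Qed.

Lemma L2 (T : Type) (le : T -> T -> Prop) (zeta : T -> T)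
  (Hrev : forall x y, le x y -> le (zeta y) (zeta x))
  (Hinv : forall x, zeta (zeta x) = x) D k y :
  ell_set_gt le y D k <-> ell_set_gt le (zeta y) (image zeta D) k.
Proof.
  rewrite <- (@L1 T le zeta Hrev Hinv). rewrite Hinv. reflexivity.
Qed.

Lemma walk_alt (T : Type) (le : T -> T -> Prop) (Hh : height_le1 le) :
  forall z a m, walk le z a m -> forall (b : bool) x, x <> z ->
  (if b then le x z else le z x) ->
  exists u, walk le x u m /\ (if xorb b (Nat.odd m) then le u a else le a u).
Proof.
  induction 1; intros b x0 Hne Hr.
  - exists x0. split. constructor. simpl. rewrite xorb_false_r. exact Hr.
  - assert (HR : if negb b then le x z else le z x).
    { destruct b; simpl in *; destruct H0; auto; exfalso.
      + eapply Hh; eauto.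
      + eapply (Hh z x x0); eauto. }
    destruct (IHwalk (negb b) x H HR) as [u [Wu Hu]].
    exists u. split.
    + apply walkS with x; auto. destruct b; [left|right]; exact Hr.
    + rewrite Nat.odd_succ, <- Nat.negb_odd.
      destruct b; destruct (Nat.odd n); simpl in *; auto.
Qed.

Lemma key (T : Type) (le : T -> T -> Prop) (Hh : height_le1 le)
  (Hrefl : forall x, le x x) (D : T -> Prop) k
  (HD : if Nat.even k then decreasing le D else increasing le D) x :
  ell_set_gt le x D (S k) <-> (forall y, le y x -> ell_set_gt le y D k).
Proof.
  split.
  - intros H y Hyx d Hd [j [Hj W]].
    destruct (classic (y = x)) as [->|Hn].
    + apply (H d Hd). exists j; split; [lia|auto].
    + apply (H d Hd). exists (S j). split. lia.
      apply walkS with y; auto.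
  - intros H d Hd [j [Hj W]].
    destruct (le_lt_dec j k).
    + apply (H x (Hrefl x) d Hd). exists j; auto.
    + assert (j = S k) by lia. subst.
      inversion W as [|x' z d' n' Hxz Hc Wz]; subst.
      destruct Hc as [Hup|Hdn].
      * destruct (@walk_alt T le Hh _ _ _ Wz true x Hxz Hup) as [u [Wu Hu]].
        rewrite xorb_true_l, Nat.negb_odd in Hu.
        assert (Du : D u).
        { destruct (Nat.even k). exact (HD u d Hd Hu). exact (HD d u Hd Hu). }
        apply (H x (Hrefl x) u Du). exists k; auto.
      * apply (H z Hdn d Hd). exists k; auto.
Qed.

Theorem lemma3p2 (T : Type) (opn : (T -> Prop) -> Prop) (le : T -> T -> Prop)
  (zeta : T -> T)
  (HP : pm_space opn le zeta) (Hh : height_le1 le)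
  (X : T -> Prop) (HXc : clopen opn X) (HXd : decreasing le X) :
  (forall n : nat, forall x : T,
     iter_ps le zeta n X x <->
     (if Nat.even n
      then ell_set_gt le x (fun y => ~ X y) n
      else ell_set_gt le x (image zeta (fun y => ~ X y)) n)) /\
  (forall x : T,
     (ell_set_inf le x (fun y => ~ X y) <-> (forall y, Qcomp le x y -> X y)) /\
     (ell_set_inf le x (image zeta (fun y => ~ X y)) <->
        (forall y, image zeta (Qcomp le x) y -> X y))).
Proof.
  destruct HP as [[_ [_ [[Hrefl _] _]]] [_ [_ [Hrev Hinv]]]].
  set (B := fun y => ~ X y). set (A := image zeta B).
  assert (HBi : increasing le B).
  { intros x y Hx Hxy HXy. apply Hx. exact (HXd x y HXy Hxy). }
  assert (HAd : decreasing le A).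
  { intros x y [b [Hb ->]] Hxy. exists (zeta x). split.
    - intro HX. apply Hb. apply (HXd b (zeta x) HX).
      pose proof (Hrev _ _ Hxy) as H. rewrite Hinv in H. exact H.
    - symmetry; apply Hinv. }
  split.
  - induction n; intro x.
    + simpl. split.
      * intros HX y Hy [j [Hj W]]. assert (j = 0) by lia; subst.
        inversion W; subst. contradiction.
      * intros H. apply NNPP. intro HnX. apply (H x HnX).
        exists 0. split; [lia | constructor].
    + change (iter_ps le zeta (S n) X x) with
        (~ upset le (pprime zeta (iter_ps le zeta n X)) x).
      assert (Hz : forall y, image zeta (iter_ps le zeta n X) y <->
                ell_set_gt le y (if Nat.even n then A else B) n).
      { intro y. split.
        - intros [w [Hw ->]]. apply IHn in Hw. destruct (Nat.even n).
          + exact (proj1 (@L2 T le zeta Hrev Hinv B n w) Hw).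
          + exact (proj2 (@L1 T le zeta Hrev Hinv B n w) Hw).
        - intros H. exists (zeta y). split; [| symmetry; apply Hinv].
          apply IHn. destruct (Nat.even n).
          + exact (proj2 (@L1 T le zeta Hrev Hinv B n y) H).
          + exact (proj1 (@L2 T le zeta Hrev Hinv B n y) H). }
      rewrite Nat.even_succ, <- Nat.negb_even.
      assert (HR : (if negb (Nat.even n) then ell_set_gt le x B (S n)
                    else ell_set_gt le x A (S n)) <->
                   ell_set_gt le x (if Nat.even n then A else B) (S n))
        by (destruct (Nat.even n); reflexivity).
      rewrite HR.
      assert (HD : if Nat.even n then decreasing le (if Nat.even n then A else B)
                   else increasing le (if Nat.even n then A else B))
        by (destruct (Nat.even n); assumption).
      rewrite (@key T le Hh Hrefl _ _ HD).
      split.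
      * intros H y Hyx. apply NNPP. intro Hn. apply H. exists y. split; [| auto].
        intro Hi. apply Hn. apply Hz. exact Hi.
      * intros H [y [Hy Hyx]]. apply Hy. apply Hz. apply H. auto.
  - intro x. split.
    + split.
      * intros H y [n Hn]. apply NNPP; intro HnX. exact (H y HnX n Hn).
      * intros H y Hy n Hn. apply Hy. apply H. exists n; auto.
    + split.
      * intros H y [q [[n Hq] ->]]. apply NNPP; intro HnX.
        apply (H q) with n; [| exact Hq].
        exists (zeta q). split; [exact HnX | symmetry; apply Hinv].
      * intros H a [b [Hb ->]] n Hn. apply Hb. apply H.
        exists (zeta b). split. exists n; exact Hn. symmetry; apply Hinv.
Qed.
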